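(* Tight GFG-NRWs are Büchi-type: every tight GFG-NRW $\mathcal{A}=\langle\Sigma,Q,Q_0,\delta,\alpha\rangle$ whose language is recognized by some GFG-NBW has an equivalent GFG-NBW on the same structure, i.e. there is a set $\alpha'\subseteq Q$ such that $\langle\Sigma,Q,Q_0,\delta,\alpha'\rangle$, viewed as a Büchi automaton, is GFG and recognizes $L(\mathcal{A})$.
   Context: An automaton $\langle\Sigma,Q,Q_0,\delta,\alpha\rangle$ has $\delta:Q\times\Sigma\to2^Q$; runs are $r_0r_1\cdots$ with $r_0\in Q_0$, $r_{i+1}\in\delta(r_i,a_{i+1})$, accepting if the set of infinitely visited states satisfies $\alpha$. Büchi ($\alpha\subseteq Q$): $S$ accepting iff $S\cap\alpha\ne\emptyset$. Rabin ($\alpha$ a set of pairs $\langle E,F\rangle$, $E$ bad, $F$ good): $S$ accepting iff some pair has $S\cap E=\emptyset$ and $S\cap F\neq\emptyset$. NRW/NBW: nondeterministic Rabin/Büchi word automaton. $\mathcal{A}$ is GFG if there is a strategy $g:\Sigma^*\to Q$ such that for every $w=a_1a_2\cdots$, $g(\epsilon),g(a_1),g(a_1a_2),\ldots$ is a run on $w$, accepting whenever $w\in L(\mathcal{A})$. Finite-state strategies are transducers $g=\langle\Sigma,Q,M,m_0,\rho,\tau\rangle$ (finite memories $M$, $\rho:M\times\Sigma\to M$ extended to words from $m_0$, $\tau:M\to Q$, $g(u)=\tau(\rho(u))$); $m$ is a memory of $q$ if $\tau(m)=q$. $\mathcal{A}_g=\langle\Sigma,M,m_0,\rho,\alpha_g\rangle$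 where $\alpha_g$ replaces each set $F$ in $\alpha$ by $\{m\mid\tau(m)\in F\}$. A transition $\langle q,a,q'\rangle$ is used by $g$ if $q=g(u)$, $q'=g(ua)$ for some $u$. For a set $P$ of finite paths, a combination is the union of state sets of a nonempty subset of $P$. For memories $m\neq m'$ with $\tau(m)=\tau(m')$, $m$ is replaceable by $m'$ if the set of paths of $\mathcal{A}_g$ from $m'$ to $m$ is empty or all its combinations are accepting w.r.t. $\alpha_g$. $\mathcal{A}$ is tight if for some finite-state strategy $g$ witnessing its GFGness, every transition of $\mathcal{A}$ is used by $g$ and no memory is replaceable by a different memory of the same state. *)

(* Defs.v *)
From mathcomp Require Import all_boot.
Set Implicit Arguments.
Unset Strict Implicit.
Unset Printing Implicit Defensive.

Section Automata.
Variables (Sigma : finType).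

(* Infinite words w = a_1 a_2 ...; we index from 0: w i = a_(i+1). *)
Definition word := nat -> Sigma.

Definition prefix (w : word) (n : nat) : seq Sigma := mkseq w n.

Definition inf_visited (T : Type) (r : nat -> T) : T -> Prop :=
  fun q => forall n, exists m, n <= m /\ r m = q.

Definition buchi_acc (T : finType) (alpha : {set T}) (S : T -> Prop) : Prop :=
  exists q, S q /\ q \in alpha.

Definition rabin_acc (T : finType) (alpha : {set {set T} * {set T}})
    (S : T -> Prop) : Prop :=
  exists EF, EF \in alpha /\ (forall q, S q -> q \notin EF.1) /\
             (exists q, S q /\ q \in EF.2).

Variable (Q : finType).

Definition is_run (Q0 : {set Q}) (delta : Q -> Sigma -> {set Q})
    (w : word) (r : nat -> Q) : Prop :=
  r 0 \in Q0 /\ forall i, r i.+1 \in delta (r i) (w i).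

Definition lang (Q0 : {set Q}) (delta : Q -> Sigma -> {set Q})
    (acc : (Q -> Prop) -> Prop) (w : word) : Prop :=
  exists r, is_run Q0 delta w r /\ acc (inf_visited r).

Definition gfg_strategy (Q0 : {set Q}) (delta : Q -> Sigma -> {set Q})
    (acc : (Q -> Prop) -> Prop) (g : seq Sigma -> Q) : Prop :=
  forall w : word,
    is_run Q0 delta w (fun i => g (prefix w i)) /\
    (lang Q0 delta acc w -> acc (inf_visited (fun i => g (prefix w i)))).

Definition is_GFG (Q0 : {set Q}) (delta : Q -> Sigma -> {set Q})
    (acc : (Q -> Prop) -> Prop) : Prop :=
  exists g, gfg_strategy Q0 delta acc g.

Definition transducer_strategy (M : finType) (m0 : M) (rho : M -> Sigma -> M)
    (tau : M -> Q) : seq Sigma -> Q :=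
  fun u => tau (foldl rho m0 u).

Definition used_by (g : seq Sigma -> Q) (q : Q) (a : Sigma) (q' : Q) : Prop :=
  exists u, q = g u /\ q' = g (rcons u a).

Definition alpha_g (M : finType) (tau : M -> Q)
    (alpha : {set {set Q} * {set Q}}) : {set {set M} * {set M}} :=
  [set ((tau @^-1: EF.1 : {set M}), (tau @^-1: EF.2 : {set M})) | EF : {set Q} * {set Q} in alpha].

(* Finite paths of A_g = <Sigma,M,m0,rho,alpha_g> from m1 to m2:
   m1 :: p is a path of the transition graph ending in m2; its set of
   states is m1 :: p. *)
Definition is_path_g (M : finType) (rho : M -> Sigma -> M) (m1 m2 : M)
    (p : seq M) : Prop :=
  path (fun x y => [exists a, rho x a == y]) m1 p /\ last m1 p = m2.

(* S is a combination of the set of paths P (a predicate on paths, each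
   path p from m1 being represented by the state sequence m1 :: p):
   the union of the state sets of a nonempty subset of P. *)
Definition is_combination (M : finType) (m1 : M) (P : seq M -> Prop)
    (S : M -> Prop) : Prop :=
  exists P' : seq M -> Prop,
    (forall p, P' p -> P p) /\ (exists p, P' p) /\
    (forall x, S x <-> exists p, P' p /\ x \in m1 :: p).

Definition replaceable (M : finType) (rho : M -> Sigma -> M) (tau : M -> Q)
    (alpha : {set {set Q} * {set Q}}) (m m' : M) : Prop :=
  m != m' /\ tau m = tau m' /\
  ((forall p, ~ is_path_g rho m' m p) \/
   (forall S, is_combination m' (is_path_g rho m' m) S ->
              rabin_acc (alpha_g tau alpha) S)).

Definition tight (Q0 : {set Q}) (delta : Q -> Sigma -> {set Q})
    (alpha : {set {set Q} * {set Q}}) : Prop :=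
  exists (M : finType) (m0 : M) (rho : M -> Sigma -> M) (tau : M -> Q),
    gfg_strategy Q0 delta (rabin_acc alpha) (transducer_strategy m0 rho tau) /\
    (forall q a q', q' \in delta q a ->
        used_by (transducer_strategy m0 rho tau) q a q') /\
    (forall m m', ~ replaceable rho tau alpha m m').

End Automata.

(* Main.v *)
Require Import Defs.
From mathcomp Require Import all_boot.
From Stdlib Require Import ClassicalEpsilon Classical.
Set Implicit Arguments. Unset Strict Implicit. Unset Printing Implicit Defensive.

Definition pb (P : Prop) : bool := if excluded_middle_informative P then true else false.
Lemma pbP P : pb P <-> P.
Proof. rewrite /pb; case: excluded_middle_informative => H; split => //. Qed.

Section Rabin.
Variables (Q : finType) (alpha : {set {set Q} * {set Q}}).

Lemma rabin_ext (S S' : Q -> Prop) : (forall q, S q <-> S' q) ->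
  rabin_acc alpha S -> rabin_acc alpha S'.
Proof.
move=> H [EF [HEF [HE [q [Sq Fq]]]]]; exists EF; split => //; split.
  by move=> x /H; apply: HE.
by exists q; split => //; apply/H.
Qed.

Lemma rabin_union (S1 S2 S : Q -> Prop) : (forall q, S q <-> S1 q \/ S2 q) ->
  ~ rabin_acc alpha S1 -> ~ rabin_acc alpha S2 -> ~ rabin_acc alpha S.
Proof.
move=> H N1 N2 [EF [HEF [HE [q [Sq Fq]]]]].
case: (proj1 (H q) Sq) => Hq.
  apply: N1; exists EF; split => //; split; last by exists q.
  by move=> x Hx; apply: HE; apply/H; left.
apply: N2; exists EF; split => //; split; last by exists q.
by move=> x Hx; apply: HE; apply/H; right.
Qed.

Lemma rabin_bigunion (l : seq nat) (F : nat -> Q -> Prop) (S : Q -> Prop) :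
  (forall q, S q <-> exists j, j \in l /\ F j q) ->
  (forall j, j \in l -> ~ rabin_acc alpha (F j)) -> ~ rabin_acc alpha S.
Proof.
elim: l S => [|j l IH] S HS HF.
  by move=> [EF [_ [_ [q [/HS [j [] ]]]]]].
apply: (@rabin_union (F j) (fun q => exists j, j \in l /\ F j q)).
- move=> q; rewrite HS; split.
    by move=> [i [/[!in_cons] /orP [/eqP ->|Hi] Hq]]; [left|right; exists i].
  move=> [Hq|[i [Hi Hq]]]; first by exists j; rewrite mem_head.
  by exists i; rewrite in_cons Hi orbT.
- by apply: HF; rewrite mem_head.
- by apply: IH => // i Hi; apply: HF; rewrite in_cons Hi orbT.
Qed.
End Rabin.

Section Inf.
Variable (T : finType).

Lemma inf_after (r : nat -> T) : exists N, forall i, N <= i -> inf_visited r (r i).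
Proof.
suff: forall s : seq T, exists N, forall i, N <= i -> r i \in s -> inf_visited r (r i).
  by move=> /(_ (enum T)) [N HN]; exists N => i Hi; apply: HN => //; rewrite mem_enum.
elim=> [|x s [N HN]]; first by exists 0.
case: (classic (inf_visited r x)) => Hx.
  by exists N => i Hi; rewrite in_cons => /orP [/eqP ->|]; [done | exact: HN].
have [Nx HNx]: exists Nx, forall m, Nx <= m -> r m <> x.
  apply: NNPP => H; apply: Hx => n; apply: NNPP => H2; apply: H; exists n => m Hm Hrm.
  by apply: H2; exists m.
exists (maxn N Nx) => i Hi; rewrite in_cons => /orP [/eqP E|Hs].
  by exfalso; apply: (HNx i) => //; apply: leq_trans (leq_maxr _ _) Hi.
by apply: HN => //; apply: leq_trans (leq_maxl _ _) Hi.
Qed.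

Lemma inf_pigeon (r : nat -> T) (P : T -> Prop) :
  (forall N, exists j, N <= j /\ P (r j)) -> exists q, inf_visited r q /\ P q.
Proof.
move=> H; have [N HN] := inf_after r.
have [j [Hj Pj]] := H N; exists (r j); split => //; exact: HN.
Qed.

Lemma inf_map (U : Type) (r : nat -> T) (f : T -> U) q :
  inf_visited (fun i => f (r i)) q <-> exists x, inf_visited r x /\ f x = q.
Proof.
split.
  move=> H; apply: (inf_pigeon (P := fun x => f x = q)) => N.
  by have [m [Hm E]] := H N; exists m.
move=> [x [Hx <-]] n; have [m [Hm E]] := Hx n; exists m; by rewrite E.
Qed.

Lemma segment (r : nat -> T) i1 : (forall i, i1 <= i -> inf_visited r (r i)) ->
  exists i2, i1 < i2 /\ r i2 = r i1 /\
   forall t, inf_visited r t -> exists j, i1 <= j <= i2 /\ r j = t.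
Proof.
move=> Hinf.
have: forall s : seq T, exists J, i1 <= J /\ forall t, t \in s -> inf_visited r t ->
   exists j, i1 <= j <= J /\ r j = t.
  elim=> [|x s [J [HJ HS]]]; first by exists i1.
  case: (classic (inf_visited r x)) => Hx.
    have [j [Hj Ej]] := Hx i1.
    exists (maxn J j); split; first by apply: leq_trans HJ (leq_maxl _ _).
    move=> t; rewrite in_cons => /orP [/eqP ->|Ht] Hit.
      by exists j; rewrite Hj leq_maxr.
    have [j' [/andP [H1 H2] E]] := HS t Ht Hit.
    by exists j'; rewrite H1 E (leq_trans H2 (leq_maxl _ _)).
  exists J; split => // t; rewrite in_cons => /orP [/eqP ->|Ht] Hit //.
  exact: HS.
move=> /(_ (enum T)) [J [HJ HS]].
have [i2 [Hi2 E]] := Hinf i1 (leqnn _) (J.+1).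
exists i2; split; first by apply: leq_ltn_trans HJ Hi2.
split => // t Ht; have [j [/andP [H1 H2] E']] := HS t (mem_enum _ _) Ht.
by exists j; rewrite H1 E' (leq_trans H2 (ltnW Hi2)).
Qed.
End Inf.


Section Paths.
Variables (Sigma M : finType) (rho : M -> Sigma -> M).

Lemma is_path_cat x y z p q : is_path_g rho x y p -> is_path_g rho y z q ->
  is_path_g rho x z (p ++ q).
Proof. by move=> [Hp Hl] [Hq Hl']; split; [rewrite cat_path Hp Hl Hq | rewrite last_cat Hl]. Qed.

Lemma is_path_nil x : is_path_g rho x x [::].
Proof. by []. Qed.

Lemma is_path_step x a : is_path_g rho x (rho x a) [:: rho x a].
Proof. by split => //=; rewrite andbT; apply/existsP; exists a. Qed.

Lemma is_path_chain (f : nat -> M) (piece : nat -> seq M) a n :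
  (forall j, a <= j < a + n -> is_path_g rho (f j) (f j.+1) (piece j)) ->
  is_path_g rho (f a) (f (a + n)) (flatten [seq piece j | j <- iota a n]).
Proof.
elim: n a => [|n IH] a H; first by rewrite addn0.
rewrite /= -addSnnS; apply: is_path_cat.
  by apply: H; rewrite leqnn addnS ltnS leq_addr.
apply: IH => j /andP [H1 H2]; apply: H; rewrite (ltnW H1) /=.
by rewrite addnS -addSn.
Qed.

Lemma is_path_flatten x cs : (forall c, c \in cs -> is_path_g rho x x c) ->
  is_path_g rho x x (flatten cs).
Proof.
elim: cs => [|c cs IH] H //=; apply: is_path_cat.
  by apply: H; rewrite mem_head.
by apply: IH => d Hd; apply: H; rewrite in_cons Hd orbT.
Qed.

Definition mrun (m0 : M) (w : word Sigma) i := foldl rho m0 (Defs.prefix w i).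

Lemma prefixS (w : word Sigma) i : Defs.prefix w i.+1 = rcons (Defs.prefix w i) (w i).
Proof. by rewrite /Defs.prefix mkseqS. Qed.

Lemma mrunS m0 w i : mrun m0 w i.+1 = rho (mrun m0 w i) (w i).
Proof. by rewrite /mrun prefixS foldl_rcons. Qed.

Variable a0 : Sigma.
Definition letter (x y : M) : Sigma := odflt a0 [pick a | rho x a == y].
Fixpoint wordof (x : M) (p : seq M) : seq Sigma :=
  match p with [::] => [::] | y :: p' => letter x y :: wordof y p' end.

Lemma size_wordof x p : size (wordof x p) = size p.
Proof. by elim: p x => //= y p IH x; rewrite IH. Qed.

Lemma wordof_cat x p q : wordof x (p ++ q) = wordof x p ++ wordof (last x p) q.
Proof. by elim: p x => //= y p IH x; rewrite IH. Qed.

Lemma letterP x y : [exists a, rho x a == y] -> rho x (letter x y) = y.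
Proof.
rewrite /letter => /existsP [a Ha]; case: pickP => [b /eqP //|/(_ a)].
by rewrite Ha.
Qed.

Lemma foldl_wordof_take x p t : path (fun x y => [exists a, rho x a == y]) x p ->
  t <= size p -> foldl rho x (take t (wordof x p)) = nth x (x :: p) t.
Proof.
elim: p x t => [|y p IH] x t /=.
  by move=> _; rewrite leqn0 => /eqP ->.
move=> /andP [Hxy Hp]; case: t => [|t] //= Ht.
by rewrite (letterP Hxy) IH //; apply: set_nth_default.
Qed.

Lemma foldl_wordof x y p : is_path_g rho x y p -> foldl rho x (wordof x p) = y.
Proof.
move=> [Hp <-]; rewrite -(take_size (wordof x p)) size_wordof foldl_wordof_take //.
by rewrite -last_nth.
Qed.

End Paths.


Section Lim.
Variables (Sigma M : finType) (rho : M -> Sigma -> M) (m0 : M) (a0 : Sigma).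
Variable vs : nat -> seq Sigma.
Hypothesis Hext : forall n, exists s, vs n.+1 = vs n ++ s.
Hypothesis Hsize : forall n, n <= size (vs n).

Definition limw : word Sigma := fun i => nth a0 (vs i.+1) i.

Lemma vs_mono n n' : n <= n' -> exists s, vs n' = vs n ++ s.
Proof.
move=> /subnKC <-; elim: (n' - n) => [|k [s Hs]]; first by exists [::]; rewrite addn0 cats0.
have [s' Hs'] := Hext (n + k); exists (s ++ s'); by rewrite addnS Hs' Hs catA.
Qed.

Lemma nth_vs n n' i : i < size (vs n) -> i < size (vs n') -> nth a0 (vs n) i = nth a0 (vs n') i.
Proof.
move=> H1 H2.
have [s1 E1] := vs_mono (leq_maxl n n'); have [s2 E2] := vs_mono (leq_maxr n n').
have: nth a0 (vs (maxn n n')) i = nth a0 (vs (maxn n n')) i by [].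
by rewrite {1}E1 E2 !nth_cat H1 H2.
Qed.

Lemma limw_prefix n j : j <= size (vs n) -> Defs.prefix limw j = take j (vs n).
Proof.
move=> Hj; apply: (@eq_from_nth _ a0); first by rewrite size_mkseq size_takel.
rewrite size_mkseq => i Hi; rewrite nth_mkseq // nth_take // /limw.
apply: nth_vs; first exact: Hsize.
exact: leq_trans Hi Hj.
Qed.

Lemma mrun_lim n i : i <= size (vs n) -> mrun rho m0 limw i = foldl rho m0 (take i (vs n)).
Proof. by move=> H; rewrite /mrun (limw_prefix H). Qed.
End Lim.

Section Blocks.
Variables (Sigma M : finType) (rho : M -> Sigma -> M) (m0 : M) (a0 : Sigma).
Variables (m : M) (W : nat -> seq M) (X : seq M) (vs : nat -> seq Sigma).
Hypothesis HW : forall n, is_path_g rho m m (W n).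
Hypothesis HWne : forall n, W n != [::].
Hypothesis HX : forall n x, (x \in m :: W n) = (x \in X).
Hypothesis Hv0 : foldl rho m0 (vs 0) = m.
Hypothesis HvS : forall n, vs n.+1 = vs n ++ wordof rho a0 m (W n).

Lemma blocks_foldl n : foldl rho m0 (vs n) = m.
Proof. elim: n => // n IH; by rewrite HvS foldl_cat IH (foldl_wordof a0 (HW n)). Qed.

Lemma blocks_ext n : exists s, vs n.+1 = vs n ++ s.
Proof. by exists (wordof rho a0 m (W n)). Qed.

Lemma blocks_size n : n <= size (vs n).
Proof.
elim: n => // n IH; rewrite HvS size_cat size_wordof.
by apply: leq_ltn_trans IH _; rewrite -[X in X < _]addn0 ltn_add2l lt0n size_eq0 HWne.
Qed.

Lemma blocks_in n t : size (vs 0) <= t <= size (vs n) -> foldl rho m0 (take t (vs n)) \in X.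
Proof.
elim: n t => [|n IH] t.
  by rewrite -eqn_leq => /eqP <-; rewrite take_size Hv0 -(HX 0) mem_head.
move=> /andP [H1 H2]; rewrite HvS take_cat.
case: ltnP => Ht; first by apply: IH; rewrite H1 ltnW.
rewrite foldl_cat blocks_foldl foldl_wordof_take.
- rewrite -(HX n); apply: mem_nth => /=; rewrite ltnS leq_subLR.
  by move: H2; rewrite HvS size_cat size_wordof.
- by case: (HW n).
- rewrite leq_subLR; by move: H2; rewrite HvS size_cat size_wordof.
Qed.

Lemma blocks_inf x : inf_visited (mrun rho m0 (limw a0 vs)) x <-> x \in X.
Proof.
split.
  move=> /(_ (size (vs 0))) [i [Hi <-]].
  rewrite (mrun_lim rho m0 a0 blocks_ext blocks_size (blocks_size i)).
  by apply: blocks_in; rewrite Hi blocks_size.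
move=> Hx N; rewrite -(HX N) in Hx.
set t := index x (m :: W N).
have Ht : t <= size (W N) by rewrite -ltnS; move: Hx; rewrite -index_mem.
exists (size (vs N) + t); split; first by apply: leq_trans (blocks_size N) (leq_addr _ _).
rewrite (@mrun_lim _ _ rho m0 a0 _ blocks_ext blocks_size N.+1); last first.
  by rewrite HvS size_cat size_wordof leq_add2l.
rewrite HvS take_cat ltnNge leq_addr /= addKn foldl_cat blocks_foldl foldl_wordof_take //.
  by rewrite nth_index.
by case: (HW N).
Qed.
End Blocks.


Fixpoint rcat (T : Type) (n : nat) (s : seq T) : seq T :=
  match n with 0 => [::] | n.+1 => rcat n s ++ s end.

Lemma mem_rcat (T : eqType) n (s : seq T) x : 0 < n -> (x \in rcat n s) = (x \in s).
Proof.
case: n => // n _; elim: n => [|n IH] /=; first by [].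
by rewrite mem_cat IH orbb.
Qed.

Section Super.
Variables (Sigma Q M : finType) (Q0 : {set Q}) (delta : Q -> Sigma -> {set Q})
  (alpha : {set {set Q} * {set Q}}) (m0 : M) (rho : M -> Sigma -> M) (tau : M -> Q).
Hypothesis Hg : gfg_strategy Q0 delta (rabin_acc alpha) (transducer_strategy m0 rho tau).
Variables (Q' : finType) (Q0' : {set Q'}) (delta' : Q' -> Sigma -> {set Q'})
  (beta : {set Q'}) (h : seq Sigma -> Q').
Hypothesis Hh : gfg_strategy Q0' delta' (buchi_acc beta) h.
Hypothesis Hlang : forall w : word Sigma,
  lang Q0' delta' (buchi_acc beta) w <-> lang Q0 delta (rabin_acc alpha) w.

Definition accL (s : seq Q) := rabin_acc alpha (fun q => q \in s).

Lemma grun_acc_iff (w : word Sigma) (X : seq M) :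
  (forall x, inf_visited (mrun rho m0 w) x <-> x \in X) ->
  rabin_acc alpha (inf_visited (fun i => transducer_strategy m0 rho tau (Defs.prefix w i)))
  <-> accL (map tau X).
Proof.
move=> HX.
have E : forall q, inf_visited (fun i => transducer_strategy m0 rho tau (Defs.prefix w i)) q
   <-> q \in map tau X.
  move=> q; rewrite (inf_map (mrun rho m0 w) tau q); split.
    by move=> [x [/HX Hx <-]]; apply: map_f.
  by move=> /mapP [x /HX Hx ->]; exists x.
by split; apply: rabin_ext => q; rewrite E.
Qed.

Lemma in_L_of_acc (w : word Sigma) :
  rabin_acc alpha (inf_visited (fun i => transducer_strategy m0 rho tau (Defs.prefix w i))) ->
  lang Q0 delta (rabin_acc alpha) w.
Proof. by move=> H; exists (fun i => transducer_strategy m0 rho tau (Defs.prefix w i)); split => //; case: (Hg w). Qed.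

Lemma h_visits (w : word Sigma) : lang Q0 delta (rabin_acc alpha) w ->
  forall N, exists j, N <= j /\ h (Defs.prefix w j) \in beta.
Proof.
move=> /Hlang HB; have [_ /(_ HB) [q [Hq Hb]]] := Hh w.
by move=> N; have [j [Hj E]] := Hq N; exists j; rewrite E.
Qed.

Lemma superset u c d : let m := foldl rho m0 u in
  c != [::] -> is_path_g rho m m c -> is_path_g rho m m d ->
  accL (map tau (m :: c)) -> accL (map tau (m :: (c ++ d))).
Proof.
move=> m Hc Pc Pd Ac.
have [a0 _] : exists a0 : Sigma, True.
  have [y [c' Ec]] : exists y c', c = y :: c' by case: (c) Hc => // y c' _; exists y, c'.
  have := Pc; rewrite Ec => -[/= /andP [/existsP [a _] _] _]; by exists a.
set cw := wordof rho a0 m c; set dw := wordof rho a0 m d.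
have rcat_path : forall k, is_path_g rho m m (rcat k c).
  by elim=> [|k IH] //=; apply: is_path_cat IH Pc.
have rcat_word : forall k, wordof rho a0 m (rcat k c) = rcat k cw.
  elim=> [|k IH] //=; rewrite wordof_cat IH; case: (rcat_path k) => _ ->; by [].
pose P v k := exists j, size (v ++ dw) < j <= size (v ++ dw ++ rcat k cw) /\
   h (take j (v ++ dw ++ rcat k cw)) \in beta.
have Pex : forall v, foldl rho m0 v = m -> exists k, P v k.
  move=> v Hv.
  pose vsP := fun n => (v ++ dw) ++ rcat n cw.
  have HvS : forall n, vsP n.+1 = vsP n ++ wordof rho a0 m c by move=> n; rewrite /vsP /= catA.
  have Hv0 : foldl rho m0 (vsP 0) = m by rewrite /vsP cats0 foldl_cat Hv (foldl_wordof a0 Pd).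
  have HX : forall (n : nat) x, (x \in m :: c) = (x \in m :: c) by [].
  have Hinf := blocks_inf (W := fun _ => c) (fun _ => Pc) (fun _ => Hc) HX Hv0 HvS.
  have Hacc := proj2 (grun_acc_iff Hinf) Ac.
  have [j [Hj Hb]] := h_visits (in_L_of_acc Hacc) (size (v ++ dw)).+1.
  have Hs := blocks_size (W := fun _ => c) (fun _ => Hc) HvS j.
  have Hext : forall n, exists s, vsP n.+1 = vsP n ++ s.
    by move=> n; exists (wordof rho a0 m c).
  have Hsz := blocks_size (W := fun _ => c) (fun _ => Hc) HvS.
  exists j, j; rewrite catA Hj; split; first exact Hs.
  by move: Hb; rewrite (limw_prefix a0 Hext Hsz Hs).
pose K v := match excluded_middle_informative (exists k, P v k) with
  | left H => proj1_sig (constructive_indefinite_description _ H) | right _ => 0 end.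
have KP : forall v, foldl rho m0 v = m -> P v (K v).
  move=> v Hv; rewrite /K; case: excluded_middle_informative => [H|H]; last first.
    by exfalso; apply: H; apply: Pex.
  exact: proj2_sig (constructive_indefinite_description _ H).
pose vsR := fix vsR n := match n with 0 => u | n.+1 => vsR n ++ dw ++ rcat (K (vsR n)) cw end.
pose W n := d ++ rcat (K (vsR n)) c.
have HW : forall n, is_path_g rho m m (W n) by move=> n; apply: is_path_cat Pd (rcat_path _).
have vsRS : forall n, vsR n.+1 = vsR n ++ wordof rho a0 m (W n).
  by move=> n; rewrite /W wordof_cat; case: Pd => _ ->; rewrite rcat_word.
have Hfold : forall n, foldl rho m0 (vsR n) = m.
  elim=> [|n IH] //; by rewrite vsRS foldl_cat IH (foldl_wordof a0 (HW n)).
have KP' := fun n => KP _ (Hfold n).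
have Kpos : forall n, 0 < K (vsR n).
  move=> n; have [j [/andP [H1 H2] _]] := KP' n.
  move: H2; case: (K (vsR n)) => [|k] // H2; rewrite /= cats0 in H2.
  by rewrite ltnNge H2 in H1.
have [x0 Hx0] : exists x, x \in c by case: (c) Hc => // y c' _; exists y; rewrite mem_head.
have HWne : forall n, W n != [::].
  move=> n; apply/eqP => E; have : x0 \in W n by rewrite mem_cat mem_rcat ?Kpos // Hx0 orbT.
  by rewrite E.
have HX : forall n x, (x \in m :: W n) = (x \in m :: (c ++ d)).
  by move=> n x; rewrite !in_cons !mem_cat mem_rcat ?Kpos // [(x \in d) || _]orbC.
have Hinf := blocks_inf HW HWne HX (Hfold 0) vsRS.
have Hext : forall n, exists s, vsR n.+1 = vsR n ++ s by move=> n; exists (wordof rho a0 m (W n)).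
have Hsz := blocks_size HWne vsRS.
set w := limw a0 vsR in Hinf.
have HB : lang Q0' delta' (buchi_acc beta) w.
  exists (fun i => h (Defs.prefix w i)); split; first by case: (Hh w).
  apply: (inf_pigeon (P := fun q => q \in beta)) => N.
  have [j [/andP [H1 H2] H3]] := KP' N.
  exists j; split.
    apply: leq_trans (Hsz N) _; apply: ltnW; apply: leq_trans H1; by rewrite size_cat leq_addr.
  by rewrite /w (limw_prefix a0 Hext Hsz (n := N.+1) H2).
have [_ /(_ (proj1 (Hlang w) HB))] := Hg w.
by move/(grun_acc_iff Hinf).
Qed.
End Super.


Lemma alpha_g_acc (Q M : finType) (tau : M -> Q) (alpha : {set {set Q} * {set Q}})
  (S : M -> Prop) :
  rabin_acc alpha (fun q => exists z, S z /\ tau z = q) -> rabin_acc (alpha_g tau alpha) S.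
Proof.
move=> [EF [HEF [HE [q [[z [Sz Ez]] Fq]]]]].
exists (tau @^-1: EF.1, tau @^-1: EF.2); split; first by apply/imsetP; exists EF.
split; first by move=> z' Sz'; rewrite inE; apply: HE; exists z'.
by exists z; split => //; rewrite inE Ez.
Qed.

Lemma mem_walk_cat (T : eqType) (m mu : T) p q x : last m p = mu ->
  (x \in m :: p ++ q) = (x \in m :: p) || (x \in mu :: q).
Proof.
move=> Hl; have Hm : mu \in m :: p by rewrite -Hl mem_last.
rewrite -cat_cons mem_cat [x \in mu :: q]in_cons.
by case: (x =P mu) => [->|_] //=; rewrite Hm.
Qed.

Lemma finite_cover (M : finType) (x : M) (P' : seq M -> Prop) :
  (exists p, P' p) -> exists Ls : seq (seq M), Ls != [::] /\ (forall p, p \in Ls -> P' p) /\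
   forall z, (exists p, P' p /\ z \in x :: p) -> exists p, p \in Ls /\ z \in x :: p.
Proof.
move=> [p0 Hp0].
suff: forall s : seq M, exists Ls : seq (seq M), Ls != [::] /\ (forall p, p \in Ls -> P' p) /\
   forall z, z \in s -> (exists p, P' p /\ z \in x :: p) -> exists p, p \in Ls /\ z \in x :: p.
  move=> /(_ (enum M)) [Ls [H1 [H2 H3]]]; exists Ls; do 2!split => //.
  by move=> z; apply: H3; rewrite mem_enum.
elim=> [|y s [Ls [H1 [H2 H3]]]].
  by exists [:: p0]; split => //; split => // p; rewrite inE => /eqP ->.
case: (classic (exists p, P' p /\ y \in x :: p)) => [[py [Hpy Hy]]|Hn].
  exists (py :: Ls); split => //; split.
    by move=> p; rewrite in_cons => /orP [/eqP ->|/H2].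
  move=> z; rewrite in_cons => /orP [/eqP ->|Hz] Hex; first by exists py; rewrite mem_head.
  by have [p [Hp Hzp]] := H3 z Hz Hex; exists p; rewrite in_cons Hp orbT.
exists Ls; do 2!split => //.
move=> z; rewrite in_cons => /orP [/eqP ->|Hz] Hex; first by exfalso.
exact: H3.
Qed.

Section Detour.
Variables (Sigma Q M : finType) (alpha : {set {set Q} * {set Q}})
  (rho : M -> Sigma -> M) (tau : M -> Q).
Hypothesis Hnorep : forall m m', ~ replaceable rho tau alpha m m'.

Lemma combo x y : x != y -> tau x = tau y ->
  exists Ls : seq (seq M), Ls != [::] /\ (forall p, p \in Ls -> is_path_g rho x y p) /\
   ~ rabin_acc alpha (fun q => exists p, p \in Ls /\ q \in map tau (x :: p)).
Proof.
move=> Hxy Htau.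
have : ~ (forall S, is_combination x (is_path_g rho x y) S -> rabin_acc (alpha_g tau alpha) S).
  move=> H; apply: (Hnorep (m := y) (m' := x)); split; first by rewrite eq_sym.
  by split => //; right.
move=> Hn; have [S HS'] := not_all_ex_not _ _ Hn.
have [HC HnS] := imply_to_and _ _ HS'.
move: HC => [P' [HP' [Hne HS]]].
have [Ls [H1 [H2 H3]]] := finite_cover x Hne.
exists Ls; split => //; split; first by move=> p /H2 /HP'.
move=> Hacc; apply: HnS; apply: alpha_g_acc; apply: rabin_ext Hacc => q; split.
  move=> [p [Hp /mapP [z Hz ->]]]; exists z; split => //; apply/HS.
  by exists p; split => //; apply: H2.
move=> [z [/HS Hz <-]]; have [p [Hp Hzp]] := H3 z Hz.
by exists p; split => //; apply: map_f.
Qed.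

Lemma detour mu nu : tau mu = tau nu ->
  exists pd Yd, is_path_g rho mu nu pd /\ ~ accL alpha Yd /\
    forall q, q \in map tau (mu :: pd) <-> q = tau mu \/ q \in Yd.
Proof.
case: (mu =P nu) => [<- _|/eqP Hne Ht].
  exists [::], [::]; split => //; split; first by move=> [EF [_ [_ [q []]]]].
  by move=> q; rewrite /= inE; split => [/eqP|[->|]] //; left.
have [Ls1 [Hne1 [HP1 Hr1]]] := combo Hne Ht.
have Hne' : nu != mu by rewrite eq_sym.
have [Ls2 [Hne2 [HP2 Hr2]]] := combo Hne' (esym Ht).
have [p0 Hp0] : exists p0, p0 \in Ls1 by case: (Ls1) Hne1 => // p ? _; exists p; rewrite mem_head.
have [r0 Hr0] : exists r0, r0 \in Ls2 by case: (Ls2) Hne2 => // p ? _; exists p; rewrite mem_head.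
pose walk := flatten ([seq p ++ r0 | p <- Ls1] ++ [seq p0 ++ r | r <- Ls2]) ++ p0.
have Pw : is_path_g rho mu nu walk.
  apply: is_path_cat (HP1 _ Hp0); apply: is_path_flatten => c; rewrite mem_cat.
  case/orP => /mapP [p Hp ->]; apply: is_path_cat.
  - exact: HP1.
  - exact: HP2.
  - exact: HP1.
  - exact: HP2.
have Hnu : nu \in mu :: p0 by case: (HP1 _ Hp0) => _ <-; apply: mem_last.
have Mw : forall z, z \in mu :: walk <->
   (exists p, p \in Ls1 /\ z \in mu :: p) \/ (exists r, r \in Ls2 /\ z \in nu :: r).
  move=> z; split.
    rewrite in_cons => /orP [/eqP ->|]; first by left; exists p0; rewrite mem_head.
    rewrite mem_cat => /orP []; last first.
      by move=> Hz; left; exists p0; rewrite in_cons Hz orbT.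
    move=> /flattenP [c]; rewrite mem_cat => /orP [] /mapP [p Hp ->]; rewrite mem_cat => /orP [] Hz.
    - by left; exists p; rewrite in_cons Hz orbT.
    - by right; exists r0; rewrite in_cons Hz orbT.
    - by left; exists p0; rewrite in_cons Hz orbT.
    - by right; exists p; rewrite in_cons Hz orbT.
  have Hw1 : forall p, p \in Ls1 -> {subset p <= walk}.
    move=> p Hp y Hy; rewrite mem_cat; apply/orP; left; apply/flattenP.
    exists (p ++ r0); last by rewrite mem_cat Hy.
    by rewrite mem_cat; apply/orP; left; exact: (map_f (fun q => q ++ r0) Hp).
  have Hw2 : forall r, r \in Ls2 -> {subset r <= walk}.
    move=> r Hr y Hy; rewrite mem_cat; apply/orP; left; apply/flattenP.
    exists (p0 ++ r); last by rewrite mem_cat Hy orbT.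
    by rewrite mem_cat; apply/orP; right; exact: (map_f (fun q => p0 ++ q) Hr).
  case=> [[p [Hp]]|[r [Hr]]]; rewrite in_cons => /orP [/eqP ->|Hz].
  - by rewrite mem_head.
  - by rewrite in_cons (Hw1 _ Hp _ Hz) orbT.
  - move: Hnu; rewrite in_cons => /orP [/eqP ->|H]; first by rewrite mem_head.
    by rewrite in_cons mem_cat H !orbT.
  - by rewrite in_cons (Hw2 _ Hr _ Hz) orbT.
exists walk, (map tau (mu :: walk)); split => //; split; last first.
  by move=> q; split => [|[->|]] //; [right | rewrite mem_head].
apply: (@rabin_union _ alpha (fun q => exists p, p \in Ls1 /\ q \in map tau (mu :: p))
  (fun q => exists p, p \in Ls2 /\ q \in map tau (nu :: p)) _ _ Hr1 Hr2).
move=> q; split.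
  move=> /mapP [z /Mw [[p [Hp Hz]]|[p [Hp Hz]]] ->]; [left|right]; exists p; split => //;
  exact: map_f.
move=> [[p [Hp /mapP [z Hz ->]]]|[p [Hp /mapP [z Hz ->]]]]; apply: map_f; apply/Mw;
  [left|right]; exists p; split => //.
Qed.
End Detour.


Lemma map_walk_cat (T U : eqType) (f : T -> U) (m mu : T) p q x : last m p = mu ->
  (x \in map f (m :: p ++ q)) = (x \in map f (m :: p)) || (x \in map f (mu :: q)).
Proof.
move=> Hl.
have E : (m :: p ++ q) =i (m :: p) ++ (mu :: q).
  by move=> y; rewrite (mem_walk_cat _ _ Hl) mem_cat.
by rewrite (eq_mem_map f E x) map_cat mem_cat.
Qed.

Section Main.
Variables (Sigma Q M : finType) (Q0 : {set Q}) (delta : Q -> Sigma -> {set Q})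
  (alpha : {set {set Q} * {set Q}}) (m0 : M) (rho : M -> Sigma -> M) (tau : M -> Q).
Hypothesis Hg : gfg_strategy Q0 delta (rabin_acc alpha) (transducer_strategy m0 rho tau).
Hypothesis Hused : forall q a q', q' \in delta q a ->
        used_by (transducer_strategy m0 rho tau) q a q'.
Hypothesis Hnorep : forall m m', ~ replaceable rho tau alpha m m'.

Definition good (m : M) := forall c, c != [::] -> is_path_g rho m m c ->
  accL alpha (map tau (m :: c)).
Definition alpha' : {set Q} := [set q | pb (exists m, tau m = q /\ good m)].

Lemma partB (w : word Sigma) r : is_run Q0 delta w r -> buchi_acc alpha' (inf_visited r) ->
  rabin_acc alpha (inf_visited r).
Proof.
move=> [_ Hr] [q [Hq]]; rewrite inE => /pbP [m [Htm Hgood]].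
apply: NNPP => Hrej.
have [N0 HN0] := inf_after r.
have [i1 [Hi1 Ei1]] := Hq N0.
have Hinf1 : forall i, i1 <= i -> inf_visited r (r i) := fun i Hi => HN0 i (leq_trans Hi1 Hi).
have [i2 [Hlt [Ei2 Hcov]]] := segment Hinf1.
have Inv : forall k, k <= i2 - i1 -> exists mu p Y, [/\ is_path_g rho m mu p,
   tau mu = r (i1 + k), k <= size p, ~ accL alpha Y &
   forall x, x \in map tau (m :: p) <-> (exists j, j <= k /\ r (i1 + j) = x) \/ x \in Y].
  elim=> [|k IH] Hk.
    exists m, [::], [::]; split => //; first by rewrite addn0 Ei1.
      by move=> [EF [_ [_ [x []]]]].
    move=> x; rewrite /= inE; split.
      by move/eqP => ->; left; exists 0; rewrite addn0 Ei1.
    case=> [[j [Hj <-]]|] //; move: Hj; rewrite leqn0 => /eqP ->.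
    by rewrite addn0 Ei1 Htm.
  have [mu [p [Y [Hp Hmu Hsz HY HM]]]] := IH (ltnW Hk).
  have [u [E1 E2]] := Hused (Hr (i1 + k)).
  set nu := foldl rho m0 u.
  have Enu : tau nu = r (i1 + k) by rewrite E1.
  have Enu' : tau (rho nu (w (i1 + k))) = r (i1 + k).+1
    by rewrite E2 /transducer_strategy foldl_rcons.
  have [pd [Yd [Hpd [HYd HMd]]]] := detour Hnorep (etrans Hmu (esym Enu)).
  exists (rho nu (w (i1 + k))), (p ++ pd ++ [:: rho nu (w (i1 + k))]), (Y ++ Yd); split.
  - by apply: is_path_cat Hp _; apply: is_path_cat Hpd (is_path_step _ _ _).
  - by rewrite Enu' addnS.
  - by rewrite !size_cat /= addn1 addnS ltnS; apply: leq_trans Hsz (leq_addr _ _).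
  - by apply: (rabin_union (S1 := fun q => q \in Y) (S2 := fun q => q \in Yd)) => // x; rewrite mem_cat; split => /orP.
  - move=> x; rewrite (map_walk_cat _ _ _ (proj2 Hp)) (map_walk_cat _ _ _ (proj2 Hpd)).
    rewrite /= !inE mem_cat Enu Enu'; split.
    + case/orP => [/HM [[j [Hj <-]]|HxY]|/orP [/HMd [->|HxY]|/orP [/eqP ->|/eqP ->]]].
      * by left; exists j; rewrite (leq_trans Hj).
      * by right; rewrite HxY.
      * by left; exists k; rewrite Hmu.
      * by right; rewrite HxY orbT.
      * by left; exists k.
      * by left; exists k.+1; rewrite addnS.
    + case=> [[j [Hj <-]]|/orP [HxY|HxY]].
      * move: Hj; rewrite leq_eqVlt => /orP [/eqP ->|Hj].
          by rewrite addnS eqxx !orbT.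
        by apply/orP; left; apply/HM; left; exists j.
      * by apply/orP; left; apply/HM; right.
      * by apply/orP; right; apply/orP; left; apply/HMd; right.
have [mu [p [Y [Hp Hmu Hsz HY HM]]]] := Inv _ (leqnn _).
have Ei : i1 + (i2 - i1) = i2 by rewrite subnKC // ltnW.
have Hmu' : tau mu = tau m by rewrite Hmu Ei Ei2 Ei1.
have [pd [Yd [Hpd [HYd HMd]]]] := detour Hnorep Hmu'.
have Hne : p ++ pd != [::].
  rewrite -size_eq0 size_cat -lt0n; apply: leq_trans (leq_addr _ _).
  by apply: leq_trans Hsz; rewrite subn_gt0.
have := Hgood _ Hne (is_path_cat Hp Hpd).
apply: (rabin_union (S1 := inf_visited r) (S2 := fun q => q \in Y ++ Yd)) => //; last first.
  by apply: (rabin_union (S1 := fun q => q \in Y) (S2 := fun q => q \in Yd)) => // x; rewrite mem_cat; split => /orP.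
move=> x; rewrite (map_walk_cat _ _ _ (proj2 Hp)) mem_cat; split.
  case/orP => [/HM [[j [Hj <-]]|HxY]|/HMd [->|HxY]].
  - by left; apply: Hinf1; apply: leq_addr.
  - by right; rewrite HxY.
  - by left; rewrite Hmu; apply: Hinf1; apply: leq_addr.
  - by right; rewrite HxY orbT.
case=> [/Hcov [j [/andP [H1 H2] <-]]|/orP [HxY|HxY]].
- apply/orP; left; apply/HM; left; exists (j - i1); rewrite subnKC //.
  by rewrite leq_sub2r.
- by apply/orP; left; apply/HM; right.
- by apply/orP; right; apply/HMd; right.
Qed.

Variables (Q' : finType) (Q0' : {set Q'}) (delta' : Q' -> Sigma -> {set Q'})
  (beta : {set Q'}) (h : seq Sigma -> Q').
Hypothesis Hh : gfg_strategy Q0' delta' (buchi_acc beta) h.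
Hypothesis Hlang : forall w : word Sigma,
  lang Q0' delta' (buchi_acc beta) w <-> lang Q0 delta (rabin_acc alpha) w.

Lemma partA (w : word Sigma) :
  rabin_acc alpha (inf_visited (fun i => transducer_strategy m0 rho tau (Defs.prefix w i))) ->
  buchi_acc alpha' (inf_visited (fun i => transducer_strategy m0 rho tau (Defs.prefix w i))).
Proof.
move=> Hacc; apply: NNPP => Hno.
have Hbad : forall x, inf_visited (mrun rho m0 w) x -> ~ good x.
  move=> x Hx Hgx; apply: Hno; exists (tau x); split.
    by apply: (proj2 (inf_map (mrun rho m0 w) tau (tau x))); exists x.
  by rewrite inE; apply/pbP; exists x.
have HC : forall x, exists c, inf_visited (mrun rho m0 w) x ->
    [/\ c != [::], is_path_g rho x x c & ~ accL alpha (map tau (x :: c))].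
  move=> x; case: (classic (inf_visited (mrun rho m0 w) x)) => Hx; last by exists [::].
  have H1 := Hbad x Hx; have [c Hc] := not_all_ex_not _ _ H1.
  have [Hc1 Hc2] := imply_to_and _ _ Hc; have [Hc3 Hc4] := imply_to_and _ _ Hc2.
  by exists c.
pose C x := proj1_sig (constructive_indefinite_description _ (HC x)).
have HCs : forall x, inf_visited (mrun rho m0 w) x ->
    [/\ C x != [::], is_path_g rho x x (C x) & ~ accL alpha (map tau (x :: C x))].
  by move=> x; exact: (proj2_sig (constructive_indefinite_description _ (HC x))).
have [N0 HN0] := inf_after (mrun rho m0 w).
have [i2 [Hlt [Ei2 Hcov]]] := segment HN0.
have Ei : N0 + (i2 - N0) = i2 by rewrite subnKC // ltnW.
have Hn : 0 < i2 - N0 by rewrite subn_gt0.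
pose c := flatten [seq [:: mrun rho m0 w j.+1] | j <- iota N0 (i2 - N0)].
pose d := flatten [seq C (mrun rho m0 w j) ++ [:: mrun rho m0 w j.+1] | j <- iota N0 (i2 - N0)].
have Pc : is_path_g rho (mrun rho m0 w N0) (mrun rho m0 w N0) c.
  have := @is_path_chain _ _ rho (mrun rho m0 w) (fun j => [:: mrun rho m0 w j.+1]) N0 (i2 - N0).
  rewrite Ei Ei2; apply => j _; rewrite mrunS; apply: is_path_step.
have Pd : is_path_g rho (mrun rho m0 w N0) (mrun rho m0 w N0) d.
  have := @is_path_chain _ _ rho (mrun rho m0 w)
     (fun j => C (mrun rho m0 w j) ++ [:: mrun rho m0 w j.+1]) N0 (i2 - N0).
  rewrite Ei Ei2; apply => j /andP [Hj _]; apply: is_path_cat.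
    by case: (HCs _ (HN0 _ Hj)) => _ H _; exact: H.
  rewrite mrunS; apply: is_path_step.
have Hiota : forall j, (j \in iota N0 (i2 - N0)) = (N0 <= j < i2) by move=> j; rewrite mem_iota Ei.
have Mc : forall x, x \in mrun rho m0 w N0 :: c <-> exists j, N0 <= j <= i2 /\ mrun rho m0 w j = x.
  move=> x; split.
    rewrite in_cons => /orP [/eqP ->|/flatten_mapP [j]]; first by exists N0; rewrite leqnn ltnW.
    rewrite Hiota inE => /andP [H1 H2] /eqP ->; exists j.+1; rewrite H2 andbT.
    by split => //; apply: leq_trans H1 (leqnSn _).
  move=> [j [/andP [H1 H2] <-]]; move: H1; rewrite leq_eqVlt => /orP [/eqP <-|H1].
    by rewrite mem_head.
  case: j H1 H2 => // j H1 H2; rewrite in_cons; apply/orP; right; apply/flatten_mapP.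
  by exists j; [rewrite Hiota -ltnS H1 H2 | rewrite inE].
have Hcne : c != [::] by rewrite /c; case: (i2 - N0) Hn.
have Hinfc : forall x, inf_visited (mrun rho m0 w) x <-> x \in mrun rho m0 w N0 :: c.
  move=> x; split; first by move/Hcov => Hx; apply/Mc.
  by move/Mc => [j [/andP [H1 _] <-]]; exact: HN0 _ H1.
have Hacc_c := proj1 (grun_acc_iff alpha tau Hinfc) Hacc.
have Hsup := superset Hg Hh Hlang (u := Defs.prefix w N0) Hcne Pc Pd Hacc_c.
have Hidx : forall j, N0 <= j <= i2 -> exists j', j' \in iota N0 (i2 - N0) /\
    mrun rho m0 w j' = mrun rho m0 w j.
  move=> j /andP [H1 H2]; move: H2; rewrite leq_eqVlt => /orP [/eqP ->|H2].
    by exists N0; rewrite Hiota leqnn Hlt Ei2.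
  by exists j; rewrite Hiota H1 H2.
apply: (rabin_bigunion (alpha := alpha) (l := iota N0 (i2 - N0))
   (F := fun j q => q \in map tau (mrun rho m0 w j :: C (mrun rho m0 w j)))) Hsup.
- move=> q; split.
  + move=> /mapP [x Hx ->].
    have : exists j, j \in iota N0 (i2 - N0) /\ x \in mrun rho m0 w j :: C (mrun rho m0 w j).
      move: Hx; rewrite -cat_cons mem_cat => /orP [].
        move=> /Mc [j Hj].
        have [j' [Hj' E]] := Hidx j (proj1 Hj); exists j'; split => //.
        by rewrite E (proj2 Hj) mem_head.
      move=> /flatten_mapP [j Hj].
      rewrite mem_cat => /orP [Hx|]; first by exists j; rewrite in_cons Hx orbT.
      rewrite inE => /eqP ->; move: Hj; rewrite Hiota => /andP [H1 H2].
      have Hb : N0 <= j.+1 <= i2 by rewrite H2 andbT; apply: leq_trans H1 (leqnSn _).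
      have [j' [Hj' E]] := Hidx j.+1 Hb.
      by exists j'; rewrite E mem_head.
    by move=> [j [Hj Hxj]]; exists j; split => //; exact: map_f.
  + move=> [j [Hj /mapP [x Hx ->]]]; apply: map_f.
    move: Hx; rewrite in_cons => /orP [/eqP ->|Hx].
      rewrite -cat_cons mem_cat; apply/orP; left; apply/Mc; exists j; split => //.
      by move: Hj; rewrite Hiota => /andP [-> /ltnW ->].
    rewrite in_cons mem_cat; apply/orP; right; apply/orP; right; apply/flatten_mapP.
    by exists j => //; rewrite mem_cat Hx.
- move=> j; rewrite Hiota => /andP [Hj _].
  by case: (HCs _ (HN0 j Hj)) => _ _ H; exact: H.
Qed.

End Main.

Theorem theorem13 (Sigma Q : finType) (Q0 : {set Q})
    (delta : Q -> Sigma -> {set Q}) (alpha : {set {set Q} * {set Q}}) :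
  is_GFG Q0 delta (rabin_acc alpha) ->
  tight Q0 delta alpha ->
  (exists (Q' : finType) (Q0' : {set Q'}) (delta' : Q' -> Sigma -> {set Q'})
          (beta : {set Q'}),
      is_GFG Q0' delta' (buchi_acc beta) /\
      forall w : word Sigma,
        lang Q0' delta' (buchi_acc beta) w <-> lang Q0 delta (rabin_acc alpha) w) ->
  exists alpha' : {set Q},
    is_GFG Q0 delta (buchi_acc alpha') /\
    forall w : word Sigma,
      lang Q0 delta (buchi_acc alpha') w <-> lang Q0 delta (rabin_acc alpha) w.
Proof.
move=> _ [M [m0 [rho [tau [Hg [Hused Hnorep]]]]]] [Q' [Q0' [delta' [beta [[h Hh] Hlang]]]]].
exists (alpha' alpha rho tau); split.
  exists (transducer_strategy m0 rho tau) => w; split; first by case: (Hg w).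
  move=> [r [Hr Hb]]; have HR := partB Hused Hnorep Hr Hb.
  have [_ H] := Hg w; apply: (partA Hg Hh Hlang); apply: H; by exists r.
move=> w; split.
  by move=> [r [Hr Hb]]; exists r; split => //; exact: (partB Hused Hnorep Hr Hb).
move=> H; have [Hrun Hacc] := Hg w.
exists (fun i => transducer_strategy m0 rho tau (Defs.prefix w i)); split => //.
exact: (partA Hg Hh Hlang (Hacc H)).
Qed.
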